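(* Let $\alpha \ge 0$, $\beta > 0$, $d_v > 0$, $\bar x \in \mathbb{R}$, $\bar y \in \mathbb{R}$ and $x_{\max} > 0$, and set $C = \bar y^2 + d_v^2$. For $\tilde x \in \mathbb{R}$ let $\delta = \bar x - \tilde x$ and $$g(\tilde x) = \beta(\delta^2 + C) + \ln(\delta^2 + C) + 2\alpha \tilde x .$$ If $\beta d_v^2 \ge 1$, then $g$ is a strictly convex function of $\tilde x$ on the interval $[0, x_{\max}]$.
   Context: This is the negative logarithm of the normalized average received SNR $e^{-\beta[(\tilde x-\bar x)^2+C]}/\big([(\tilde x-\bar x)^2+C]e^{2\alpha\tilde x}\big)$ of a single pinching antenna at position $(\tilde x,0,d_v)$ on a waveguide along the $x$-axis serving a user at $(\bar x,\bar y,0)$, where $\alpha$ is the in-waveguide attenuation coefficient and $\beta$ the LoS blockage parameter. The feasible set of antenna positions is $[0,x_{\max}]$. *)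

(* Defs.v *)
From Stdlib Require Import Reals Lra.
Open Scope R_scope.

Definition strictly_convex_on (f : R -> R) (S : R -> Prop) : Prop :=
  forall x y t, S x -> S y -> x <> y -> 0 < t < 1 ->
    f (t * x + (1 - t) * y) < t * f x + (1 - t) * f y.

Definition g (alpha beta dv xbar ybar : R) (xt : R) : R :=
  let C := ybar ^ 2 + dv ^ 2 in
  let delta := xbar - xt in
  beta * (delta ^ 2 + C) + ln (delta ^ 2 + C) + 2 * alpha * xt.

(* Main.v *)
Require Import Defs.
From Stdlib Require Import Reals Lra Psatz.
From Coquelicot Require Import Coquelicot.
Open Scope R_scope.

Lemma sc_aux (f f' : R -> R) :
  (forall c, derivable_pt_lim f c (f' c)) ->
  (forall a b, a < b -> f' a < f' b) ->
  forall x y t, x < y -> 0 < t < 1 -> f (t * x + (1 - t) * y) < t * f x + (1 - t) * f y.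
Proof.
  intros Hd Hi x y t Hxy Ht.
  remember (t * x + (1 - t) * y) as z eqn:Ez.
  assert (Hxz : x < z) by (rewrite Ez; nra).
  assert (Hzy : z < y) by (rewrite Ez; nra).
  destruct (MVT_cor2 f f' x z Hxz (fun c _ => Hd c)) as [c1 [E1 H1]].
  destruct (MVT_cor2 f f' z y Hzy (fun c _ => Hd c)) as [c2 [E2 H2]].
  assert (Hc : f' c1 < f' c2) by (apply Hi; lra).
  assert (e1 : z - x = (1 - t) * (y - x)) by (rewrite Ez; ring).
  assert (e2 : y - z = t * (y - x)) by (rewrite Ez; ring).
  rewrite e1 in E1. rewrite e2 in E2.
  assert (0 < t * (1 - t) * (y - x) * (f' c2 - f' c1)).
  { apply Rmult_lt_0_compat; [|lra]. apply Rmult_lt_0_compat; [|lra]. nra. }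
  nra.
Qed.

Lemma sc_gen (f f' : R -> R) :
  (forall c, derivable_pt_lim f c (f' c)) ->
  (forall a b, a < b -> f' a < f' b) ->
  forall x y t, x <> y -> 0 < t < 1 -> f (t * x + (1 - t) * y) < t * f x + (1 - t) * f y.
Proof.
  intros Hd Hi x y t Hxy Ht.
  destruct (Rlt_or_le x y) as [H|H].
  - apply sc_aux with f'; auto.
  - replace (t * x + (1 - t) * y) with ((1 - t) * y + (1 - (1 - t)) * x) by ring.
    replace (t * f x + (1 - t) * f y) with ((1 - t) * f y + (1 - (1 - t)) * f x) by ring.
    apply sc_aux with f'; auto; lra.
Qed.

Theorem lemma1 (alpha beta dv xbar ybar xmax : R) :
  0 <= alpha -> 0 < beta -> 0 < dv -> 0 < xmax ->
  beta * dv ^ 2 >= 1 ->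
  strictly_convex_on (g alpha beta dv xbar ybar) (fun x => 0 <= x <= xmax).
Proof.
  intros Ha Hb Hdv Hx Hbd.
  remember (ybar ^ 2 + dv ^ 2) as C eqn:EC.
  assert (HC : dv ^ 2 <= C) by (rewrite EC; nra).
  assert (Hdv2 : 0 < dv ^ 2) by nra.
  assert (Hu : forall x, 0 < (xbar - x) ^ 2 + C) by (intros x; pose proof (pow2_ge_0 (xbar - x)); lra).
  intros x y t _ _ Hxy Ht.
  apply sc_gen with
    (f' := fun x => beta * (2 * (x - xbar)) + 2 * (x - xbar) / ((xbar - x) ^ 2 + C) + 2 * alpha);
    auto.
  - intro c. apply is_derive_Reals. unfold g. rewrite <- EC.
    auto_derive.
    + specialize (Hu c). lra.
    + specialize (Hu c). field. lra.
  - intros a b Hab.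
    remember (a - xbar) as s1 eqn:Es1. remember (b - xbar) as s2 eqn:Es2.
    assert (E1 : (xbar - a) ^ 2 + C = s1 ^ 2 + C) by (rewrite Es1; ring).
    assert (E2 : (xbar - b) ^ 2 + C = s2 ^ 2 + C) by (rewrite Es2; ring).
    rewrite E1, E2.
    assert (Hs : s1 < s2) by (rewrite Es1, Es2; lra).
    assert (U1 : 0 < s1 ^ 2 + C) by nra.
    assert (U2 : 0 < s2 ^ 2 + C) by nra.
    assert (HbC : beta * C >= 1) by nra.
    assert (Key : 0 < beta * ((s1 ^ 2 + C) * (s2 ^ 2 + C)) + C - s1 * s2).
    { assert (beta * ((s1 ^ 2 + C) * (s2 ^ 2 + C)) >= s1 ^ 2 + s2 ^ 2 + C).
      { assert ((s1 ^ 2 + C) * (s2 ^ 2 + C) >= C * (s1 ^ 2 + s2 ^ 2 + C)) by nra.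
        assert (beta * ((s1 ^ 2 + C) * (s2 ^ 2 + C)) >= beta * C * (s1 ^ 2 + s2 ^ 2 + C)) by nra.
        nra. }
      nra. }
    assert (D : beta * (2 * s2) + 2 * s2 / (s2 ^ 2 + C) + 2 * alpha
               - (beta * (2 * s1) + 2 * s1 / (s1 ^ 2 + C) + 2 * alpha)
               = 2 * (s2 - s1) * (beta * ((s1 ^ 2 + C) * (s2 ^ 2 + C)) + C - s1 * s2)
                 / ((s1 ^ 2 + C) * (s2 ^ 2 + C))).
    { field. lra. }
    assert (0 < 2 * (s2 - s1) * (beta * ((s1 ^ 2 + C) * (s2 ^ 2 + C)) + C - s1 * s2)
                 / ((s1 ^ 2 + C) * (s2 ^ 2 + C))).
    { apply Rdiv_lt_0_compat; [|nra]. apply Rmult_lt_0_compat; lra. }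
    lra.
Qed.
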